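(* Let $n$ be even and let $C$ be a Type IV code of length $n$. Let $\mathrm{IV}_n$ be the set of all Type IV codes of length $n$. Then: \[ \text{(i)}\quad \frac1{|\mathrm{IV}_n|}\sum_{D\in\mathrm{IV}_n}|C\cap D|=3-\frac{3}{2^{n-1}+1}; \] \[ \text{(ii)}\quad \frac1{|\mathrm{IV}_n|}\sum_{D\in\mathrm{IV}_n}|C\cap D|^2=\frac{27\,(2^{n})^2}{(2^{n}+2)(2^{n}+8)}. \]
   Context: A Type IV code of length $n$ ($n$ even) is a linear code $C\subseteq\mathbb F_4^n$ that is self-dual with respect to the Hermitian inner product $u\cdot v=\sum_i u_i\bar v_i$, where $\bar a=a^2$, and all of whose codewords have even Hamming weight. Such codes have dimension $n/2$ over $\mathbb F_4$. *)

(* Defs.v *)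
From HB Require Import structures.
From mathcomp Require Import all_boot all_order all_algebra all_field.
Set Implicit Arguments. Unset Strict Implicit. Unset Printing Implicit Defensive.
Import Order.TTheory GRing.Theory Num.Theory.
Local Open Scope ring_scope.

Section Codes.
Variables (F : finFieldType) (n : nat).

(* conjugation a |-> a^2 (the Frobenius of F_4 over F_2) *)
Definition conj4 (a : F) : F := a ^+ 2.

Definition herm (u v : 'rV[F]_n) : F := \sum_(i < n) u 0 i * conj4 (v 0 i).

Definition hwt (u : 'rV[F]_n) : nat := #|[set i : 'I_n | u 0 i != 0]|.

Definition is_linear_code (C : {set 'rV[F]_n}) : bool :=
  (0 \in C) && [forall u in C, forall v in C, forall a : F, a *: u + v \in C].

Definition herm_dual (C : {set 'rV[F]_n}) : {set 'rV[F]_n} :=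
  [set v | [forall u in C, herm u v == 0]].

Definition typeIV (C : {set 'rV[F]_n}) : bool :=
  [&& is_linear_code C, herm_dual C == C & [forall c in C, ~~ odd (hwt c)]].

Definition IV_codes : {set {set 'rV[F]_n}} := [set C | typeIV C].

End Codes.

(* Main.v *)
Require Import Defs.
From HB Require Import structures.
From mathcomp Require Import all_boot all_order all_algebra all_field all_fingroup.
From mathcomp Require Import zify ring lra.
Import Order.TTheory GRing.Theory Num.Theory.
Set Warnings "-notation-overridden,-ambiguous-paths".
Set Implicit Arguments. Unset Strict Implicit. Unset Printing Implicit Defensive.
Local Open Scope ring_scope.

Section F4.
Variable F : finFieldType.
Hypothesis hF : #|F| = 4%N.

Lemma two0 : (2%:R : F) = 0.
Proof.
have h2 : (2 \in [pchar F])%N by apply: (card_finPcharP (n:=2)) => //; rewrite hF.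
exact: (pcharf0 h2).
Qed.

Lemma addxx (a : F) : a + a = 0.
Proof. by rewrite -mulr2n -mulr_natl two0 mul0r. Qed.

Lemma oppF (a : F) : - a = a.
Proof. by apply/eqP; rewrite eq_sym -subr_eq0 opprK addxx. Qed.

Lemma pow4 (a : F) : a ^+ 4 = a.
Proof. by rewrite -{2}(expf_card a) hF. Qed.

Lemma cube1 (a : F) : a != 0 -> a ^+ 3 = 1.
Proof. move=> a0; apply: (mulfI a0); by rewrite -exprS pow4 mulr1. Qed.

Lemma conjD (a b : F) : conj4 (a + b) = conj4 a + conj4 b.
Proof. by rewrite /conj4 sqrrD mulr2n addxx addr0. Qed.
Lemma conjM (a b : F) : conj4 (a * b) = conj4 a * conj4 b.
Proof. by rewrite /conj4 exprMn. Qed.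
Lemma conjK (a : F) : conj4 (conj4 a) = a.
Proof. by rewrite /conj4 -exprM pow4. Qed.
Lemma conj0 : conj4 (0 : F) = 0. Proof. by rewrite /conj4 expr0n. Qed.
Lemma conj1 : conj4 (1 : F) = 1. Proof. by rewrite /conj4 expr1n. Qed.
Lemma conj_inj : injective (@conj4 F).
Proof. exact: can_inj conjK. Qed.
Lemma conj_sum (I : finType) (P : pred I) (f : I -> F) :
  conj4 (\sum_(i | P i) f i) = \sum_(i | P i) conj4 (f i).
Proof. exact: (big_morph _ conjD conj0). Qed.

Variable n : nat.
Implicit Types u v w : 'rV[F]_n.

Lemma hermDl u w v : herm (u + w) v = herm u v + herm w v.
Proof. by rewrite /herm -big_split; apply: eq_bigr => i _; rewrite mxE mulrDl. Qed.
Lemma hermZl a u v : herm (a *: u) v = a * herm u v.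
Proof. by rewrite /herm mulr_sumr; apply: eq_bigr => i _; rewrite mxE mulrA. Qed.
Lemma hermDr u v w : herm u (v + w) = herm u v + herm u w.
Proof. by rewrite /herm -big_split; apply: eq_bigr => i _; rewrite mxE conjD mulrDr. Qed.
Lemma hermZr a u v : herm u (a *: v) = conj4 a * herm u v.
Proof.
rewrite /herm mulr_sumr; apply: eq_bigr => i _; rewrite mxE conjM.
by rewrite mulrA [u 0 i * _]mulrC mulrA.
Qed.
Lemma herm0l v : herm 0 v = 0.
Proof. by rewrite /herm big1 // => i _; rewrite mxE mul0r. Qed.
Lemma herm0r v : herm v 0 = 0.
Proof. by rewrite /herm big1 // => i _; rewrite mxE conj0 mulr0. Qed.
Lemma herm_sym u v : herm v u = conj4 (herm u v).
Proof.
rewrite /herm conj_sum; apply: eq_bigr => i _.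
by rewrite conjM conjK mulrC.
Qed.

Definition delta (i : 'I_n) : 'rV[F]_n := \row_j (j == i)%:R.

Lemma herm_delta u i : herm u (delta i) = u 0 i.
Proof.
rewrite /herm (bigD1 i) //= big1 ?addr0.
  by rewrite mxE eqxx conj1 mulr1.
by move=> j ji; rewrite mxE (negbTE ji) conj0 mulr0.
Qed.

Lemma herm_nondeg u : (forall v, herm u v = 0) -> u = 0.
Proof.
move=> h; apply/rowP => i; rewrite mxE -herm_delta; exact: h.
Qed.

Lemma herm_self u : herm u u = (hwt u)%:R.
Proof.
rewrite /herm /hwt -sum1_card natr_sum [RHS]big_mkcond /=.
apply: eq_bigr => i _; rewrite inE /conj4.
case: eqP => [->|/eqP ne]; first by rewrite mul0r.
by rewrite -exprS cube1.
Qed.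

Lemma natF_odd m : (m%:R : F) = (odd m)%:R.
Proof.
by rewrite -{1}(odd_double_half m) natrD -mul2n natrM two0 mul0r addr0.
Qed.

Lemma herm_self_even u : (herm u u == 0) = ~~ odd (hwt u).
Proof.
rewrite herm_self natF_odd; case: (odd _) => /=; [by rewrite oner_eq0 | by rewrite eqxx].
Qed.


Lemma typeIV_alt (D : {set 'rV[F]_n}) :
  typeIV D = is_linear_code D && (herm_dual D == D).
Proof.
rewrite /typeIV; case: (is_linear_code D) => //=.
case hd: (herm_dual D == D) => //=.
apply/forallP => c; apply/implyP => cD.
rewrite -herm_self_even; move/eqP: hd => hd.
by move: (cD); rewrite -{1}hd inE => /forallP /(_ c) /implyP; apply.
Qed.

Record isometry (g : 'rV[F]_n -> 'rV[F]_n) : Prop := Isom {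
  iso_lin : forall a u v, g (a *: u + v) = a *: g u + g v;
  iso_herm : forall u v, herm (g u) (g v) = herm u v }.

Lemma iso0 g : isometry g -> g 0 = 0.
Proof.
case=> lin _; have := lin 1 0 0; rewrite !scale1r !addr0 => h.
by apply/(addrI (g 0)); rewrite addr0 -h.
Qed.

Lemma isoD g : isometry g -> forall u v, g (u + v) = g u + g v.
Proof. move=> gi u v; have := iso_lin gi 1 u v; by rewrite !scale1r. Qed.

Lemma isoZ g : isometry g -> forall a u, g (a *: u) = a *: g u.
Proof. by move=> gi a u; rewrite -(addr0 (a *: u)) (iso_lin gi) iso0 // addr0. Qed.

Lemma iso_inj g : isometry g -> injective g.
Proof.
move=> gi u v e; apply/eqP; rewrite -subr_eq0; apply/eqP; apply: herm_nondeg => w.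
have : g (u - v) = 0 by rewrite -scaleN1r addrC (iso_lin gi) e scaleN1r addNr.
move=> h0; rewrite -(iso_herm gi) h0 herm0l //.
Qed.

Lemma iso_comp g h : isometry g -> isometry h -> isometry (g \o h).
Proof.
move=> [lg hg] [lh hh]; split => [a u v|u v] /=; first by rewrite lh lg.
by rewrite hg hh.
Qed.

Lemma iso_inv g (gi : isometry g) : isometry (invF (iso_inj gi)).
Proof.
set h := invF _; split => [a u v|u v].
  apply: (iso_inj gi); by rewrite (iso_lin gi) !f_invF.
by rewrite -(iso_herm gi) !f_invF.
Qed.

Lemma typeIV_iso g (D : {set 'rV[F]_n}) : isometry g -> typeIV D -> typeIV (g @: D).
Proof.
move=> gi; rewrite !typeIV_alt => /andP [/andP [D0 /forallP Dl] /eqP Dd].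
apply/andP; split.
  apply/andP; split; first by rewrite -(iso0 gi) imset_f.
  apply/forallP => x; apply/implyP => /imsetP [u uD ->].
  apply/forallP => y; apply/implyP => /imsetP [v vD ->].
  apply/forallP => a; rewrite -(iso_lin gi) imset_f //.
  by move: (Dl u) => /implyP /(_ uD) /forallP /(_ v) /implyP /(_ vD) /forallP.
apply/eqP/setP => y.
have [w ->] : exists w, y = g w.
  by exists (invF (iso_inj gi) y); rewrite f_invF.
rewrite (mem_imset _ _ (iso_inj gi)) -{2}Dd !inE.
apply/forallP/forallP => h x.
  apply/implyP => xD; move: (h (g x)) => /implyP; rewrite (iso_herm gi); apply; exact: imset_f.
apply/implyP => /imsetP [u uD ->]; rewrite (iso_herm gi).
by move: (h u) => /implyP /(_ uD).
Qed.

Lemma typeIV_isoE g (D : {set 'rV[F]_n}) (gi : isometry g) : typeIV (g @: D) = typeIV D.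
Proof.
apply/idP/idP; last exact: typeIV_iso.
move=> /(typeIV_iso (iso_inv gi)); rewrite -imset_comp.
congr (typeIV _).
by rewrite (eq_imset _ (invF_f (iso_inj gi))) imset_id.
Qed.


Definition scale_map (l : 'I_n -> F) (v : 'rV[F]_n) : 'rV[F]_n := \row_i (l i * v 0 i).
Definition ind (S : {set 'I_n}) : 'rV[F]_n := \row_i (i \in S)%:R.
Definition bmap (S : {set 'I_n}) (v : 'rV[F]_n) : 'rV[F]_n :=
  v + (\sum_(i in S) v 0 i) *: ind S.
Definition perm_map (p : {perm 'I_n}) (v : 'rV[F]_n) : 'rV[F]_n := \row_i v 0 (p i).

Lemma scale_iso l : (forall i, l i != 0) -> isometry (scale_map l).
Proof.
move=> l0; split => [a u v|u v].
  by apply/rowP => i; rewrite !mxE mulrDr mulrCA.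
rewrite /herm; apply: eq_bigr => i _; rewrite !mxE conjM mulrACA.
by rewrite /conj4 -exprS cube1 // mul1r.
Qed.

Lemma herm_indr u (S : {set 'I_n}) : herm u (ind S) = \sum_(i in S) u 0 i.
Proof.
rewrite /herm [RHS]big_mkcond /=; apply: eq_bigr => i _; rewrite mxE.
by case: (i \in S); rewrite ?conj1 ?conj0 ?mulr1 ?mulr0.
Qed.

Lemma herm_indl u (S : {set 'I_n}) : herm (ind S) u = conj4 (\sum_(i in S) u 0 i).
Proof. by rewrite herm_sym herm_indr. Qed.

Lemma bmap_iso (S : {set 'I_n}) : ~~ odd #|S| -> isometry (bmap S).
Proof.
move=> Se; split => [a u v|u v].
  rewrite /bmap; set su := \sum_(i in S) u 0 i.
  have -> : \sum_(i in S) (a *: u + v) 0 i = a * su + \sum_(i in S) v 0 i.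
    by rewrite /su mulr_sumr -big_split; apply: eq_bigr => i _; rewrite !mxE.
  by rewrite scalerDr scalerDl scalerA; rewrite addrACA.
have hII : herm (ind S) (ind S) = 0.
  rewrite herm_indl.
  have -> : \sum_(i in S) ind S 0 i = (#|S|)%:R.
    by rewrite -sum1_card natr_sum; apply: eq_bigr => i iS; rewrite mxE iS.
  by rewrite natF_odd (negbTE Se) conj0.
rewrite /bmap !hermDl !hermDr !hermZl !hermZr hII !mulr0 addr0 herm_indr herm_indl.
by rewrite [conj4 _ * _]mulrC -addrA addxx addr0.
Qed.

Lemma perm_iso p : isometry (perm_map p).
Proof.
split => [a u v|u v]; first by apply/rowP => i; rewrite !mxE.
rewrite /herm (reindex_inj (@perm_inj _ p^-1)) /=.
by apply: eq_bigr => i _; rewrite !mxE permKV.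
Qed.

Lemma perm_map_delta a b c : perm_map (tperm a b) (delta c) = delta (tperm a b c).
Proof.
apply/rowP => j; rewrite !mxE; congr (_%:R).
by rewrite -(inj_eq (@perm_inj _ (tperm a b))) tpermK.
Qed.

Lemma perm_mapD p u v : perm_map p (u + v) = perm_map p u + perm_map p v.
Proof. by apply/rowP => i; rewrite !mxE. Qed.


Lemma exists_omega : exists w : F, (w != 0) && (w != 1).
Proof.
case: (pickP (fun w : F => (w != 0) && (w != 1))) => [w hw|h]; first by exists w.
suff : (#|F| <= 2)%N by rewrite hF.
have sub : [set: F] \subset [set 0; 1].
  apply/subsetP => a _; rewrite !inE; move: (h a) => /=.
  by case: eqP => //= _; case: eqP.
by rewrite -cardsT (leq_trans (subset_leq_card sub)) // cards2; case: (_ != _).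
Qed.

Lemma T1 (z o : 'I_n) (x : 'rV[F]_n) : z != o -> x != 0 -> herm x x = 0 ->
  exists g, isometry g /\ g x = delta z + delta o.
Proof.
move=> zo x0 xx.
set S := [set i | x 0 i != 0].
have hS : (#|S|%:R : F) = 0 by rewrite -herm_self.
have [i0 i0S] : exists i0, i0 \in S.
  apply/existsP; apply: contraR x0 => /existsPn h; apply/eqP/rowP => i.
  by move: (h i); rewrite !inE mxE negbK => /eqP.
have [j0 j0S] : exists j0, j0 \in S :\ i0.
  case: (set_0Vmem (S :\ i0)) => [e|[j0 j0S]]; last by exists j0.
  have e1 : S = [set i0].
    apply/setP => i; rewrite in_set1; apply/idP/idP => [iS|/eqP ->//].
    apply/negPn/negP => ne; have : i \in S :\ i0 by rewrite in_setD1 ne iS.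
    by rewrite e in_set0.
  by move: hS; rewrite e1 cards1 => /eqP; rewrite oner_eq0.
move: j0S; rewrite !inE => /andP [j0i0 j0x].
have [w /andP [w0 w1]] := exists_omega.
have w10 : w + 1 != 0.
  by apply: contra w1; rewrite addr_eq0 oppF.
pose t i := if i == i0 then w else if i == j0 then w + 1 else 1.
have t0 i : t i != 0.
  by rewrite /t; case: (i == i0) => //; case: (i == j0) => //; exact: oner_neq0.
pose l1 i := if i \in S then t i / x 0 i else 1.
have l10 i : l1 i != 0.
  rewrite /l1; case: ifP => [iS|_]; last exact: oner_neq0.
  by rewrite mulf_neq0 // invr_eq0; move: iS; rewrite inE.
pose l3 i := if i == i0 then (w + 1)^-1 else if i == j0 then w^-1 else 1.
have l30 i : l3 i != 0.
  rewrite /l3; case: (i == i0); first by rewrite invr_eq0.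
  case: (i == j0); first by rewrite invr_eq0. exact: oner_neq0.
have g1x : scale_map l1 x = \row_i (if i \in S then t i else 0).
  apply/rowP => i; rewrite !mxE /l1; case: ifP => iS.
    by rewrite mulfVK //; move: iS; rewrite inE.
  by move/negbT: iS; rewrite inE negbK => /eqP ->; rewrite mulr0.
have sumt : \sum_(i in S) t i = 1.
  rewrite (bigD1 i0) //= (bigD1 j0) /=; last by rewrite !inE j0x j0i0.
  rewrite /t eqxx (negbTE j0i0) eqxx.
  rewrite (eq_bigr (fun _ => 1)); last first.
    by move=> i /andP [/andP [_ /negbTE ->] /negbTE ->].
  rewrite sumr_const.
  have cS : #|S| = (#|[pred i | (i \in S) && (i != i0) && (i != j0)]|).+2.
    rewrite (cardD1 i0) i0S add1n (cardD1 j0) !inE j0i0 j0x /= add1n.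
    congr (_.+2); apply: eq_card => i; rewrite !inE -andbA andbC andbA [(i != i0) && _]andbC; bool_congr.
  move: hS; rewrite cS -addn2 natrD two0 addr0 => ->.
  by rewrite addr0 addrA addxx add0r.
have g2x : bmap S (scale_map l1 x) = \row_i (if i \in S then t i + 1 else 0).
  rewrite /bmap g1x.
  have -> : \sum_(i in S) (\row_i (if i \in S then t i else 0)) 0 i = 1.
    by rewrite -sumt; apply: eq_bigr => i iS; rewrite mxE iS.
  apply/rowP => i; rewrite !mxE mul1r; by case: (i \in S); rewrite ?addr0.
have g3x : scale_map l3 (bmap S (scale_map l1 x)) = delta i0 + delta j0.
  rewrite g2x; apply/rowP => i; rewrite !mxE /l3 /t.
  have [->|ii0] := eqVneq i i0.
    by rewrite i0S eq_sym (negbTE j0i0) addr0 mulVf.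
  have [->|ij0] := eqVneq i j0.
    have -> : j0 \in S by rewrite inE.
    by rewrite add0r -addrA addxx addr0 mulVf.
  rewrite addr0; case: (i \in S); last by rewrite mulr0.
  by rewrite addxx mulr0.
pose j1 := tperm z i0 j0.
have j1z : j1 != z.
  apply: contra j0i0 => /eqP h; rewrite -(tpermK z i0 j0) -/j1 h tpermL //.
exists (perm_map (tperm o j1) \o perm_map (tperm z i0) \o scale_map l3 \o bmap S \o scale_map l1).
split.
  apply: iso_comp; last exact: scale_iso.
  apply: iso_comp; last by apply: bmap_iso; rewrite -herm_self_even xx.
  apply: iso_comp; last exact: scale_iso.
  apply: iso_comp; exact: perm_iso.
rewrite /= g3x !perm_mapD !perm_map_delta tpermR -/j1 tpermR tpermD //.
by rewrite eq_sym.
Qed.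

End F4.

Section Q.
Variable F : finFieldType.
Hypothesis hF : #|F| = 4%N.
Variable k : nat.

Local Notation V := ('rV[F]_(2 + k)).
Definition e1 : V := row_mx (const_mx 1) 0.
Definition Lf (X : {set 'rV[F]_k}) : {set V} :=
  [set v : V | (lsubmx v 0 ord0 == lsubmx v 0 ord_max) && (rsubmx v \in X)].

Lemma herm2 (a b : 'rV[F]_2) :
  herm a b = a 0 ord0 * conj4 (b 0 ord0) + a 0 ord_max * conj4 (b 0 ord_max).
Proof.
rewrite /herm big_ord_recl big_ord_recl big_ord0 addr0.
by have -> : lift ord0 (ord0 : 'I_1) = ord_max by apply: val_inj.
Qed.

Lemma hermRow (a b : 'rV[F]_2) (w z : 'rV[F]_k) :
  herm (row_mx a w) (row_mx b z) = herm a b + herm w z.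
Proof.
rewrite /herm big_split_ord /=; congr (_ + _); apply: eq_bigr => i _;
  by rewrite ?row_mxEl ?row_mxEr.
Qed.

Lemma herm_split (u v : V) :
  herm u v = herm (lsubmx u) (lsubmx v) + herm (rsubmx u) (rsubmx v).
Proof. by rewrite -{1}(hsubmxK u) -{1}(hsubmxK v) hermRow. Qed.


Lemma rsubmx_lin a (u v : V) : rsubmx (a *: u + v) = a *: rsubmx u + rsubmx v.
Proof. by apply/rowP => i; rewrite !mxE. Qed.
Lemma lsubmx_lin a (u v : V) : lsubmx (a *: u + v) = a *: lsubmx u + lsubmx v.
Proof. by apply/rowP => i; rewrite !mxE. Qed.

Lemma ord2_cases (j : 'I_2) : j = ord0 \/ j = ord_max.
Proof. by case: j => [[|[|//]]] Hj; [left|right]; apply: val_inj. Qed.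

Lemma decomp (v : V) : lsubmx v 0 ord0 = lsubmx v 0 ord_max ->
  v = lsubmx v 0 ord0 *: e1 + row_mx 0 (rsubmx v).
Proof.
move=> h; rewrite /e1 scale_row_mx add_row_mx scaler0 add0r addr0.
rewrite -{1}(hsubmxK v); congr (row_mx _ _); apply/rowP => j; rewrite !mxE mulr1.
move: h; rewrite !mxE => h; by case: (ord2_cases j) => ->.
Qed.

Lemma herm_e1r (v : V) : herm v e1 = lsubmx v 0 ord0 + lsubmx v 0 ord_max.
Proof.
by rewrite herm_split /e1 row_mxKl row_mxKr herm0r addr0 herm2 !mxE conj1 !mulr1.
Qed.
Lemma herm_e1l (v : V) : herm e1 v = conj4 (lsubmx v 0 ord0 + lsubmx v 0 ord_max).
Proof. by rewrite (herm_sym hF) herm_e1r. Qed.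
Lemma herm_row0r (u : V) z : herm u (row_mx 0 z) = herm (rsubmx u) z.
Proof. by rewrite herm_split row_mxKl row_mxKr herm0r add0r. Qed.
Lemma herm_row0l (u : V) z : herm (row_mx 0 z) u = herm z (rsubmx u).
Proof. by rewrite herm_split row_mxKl row_mxKr herm0l add0r. Qed.

Lemma sum0_eq (a b : F) : (a + b == 0) = (a == b).
Proof. by rewrite addr_eq0 (oppF hF). Qed.

Lemma in_dual (D : {set 'rV[F]_k}) v : (v \in herm_dual D) = [forall u in D, herm u v == 0].
Proof. by rewrite inE. Qed.

Lemma Q1 (D : {set V}) : typeIV D -> e1 \in D -> D = Lf (rsubmx @: D).
Proof.
rewrite (typeIV_alt hF) => /andP [/andP [D0 /forallP Dl] /eqP Dd] e1D.
have sub : D \subset Lf (rsubmx @: D).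
  apply/subsetP => v vD; rewrite inE imset_f // andbT -sum0_eq -herm_e1r.
  by move: e1D; rewrite -Dd inE => /forallP /(_ v) /implyP /(_ vD).
apply/eqP; rewrite eqEsubset sub /=; apply/subsetP => v.
rewrite inE => /andP [/eqP hv /imsetP [u uD ru]].
have : u \in Lf (rsubmx @: D) by move/subsetP: sub; apply.
rewrite inE => /andP [/eqP hu _].
have -> : v = (lsubmx v 0 ord0 - lsubmx u 0 ord0) *: e1 + u.
  rewrite {2}(decomp hu) addrA -scalerDl subrK -ru; exact: decomp.
by move: (Dl e1) => /implyP /(_ e1D) /forallP /(_ u) /implyP /(_ uD) /forallP.
Qed.

Lemma Q1b (D : {set V}) : typeIV D -> e1 \in D -> typeIV (rsubmx @: D).
Proof.
move=> DIV e1D; have DL := Q1 DIV e1D.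
move: DIV; rewrite !(typeIV_alt hF) => /andP [/andP [D0 /forallP Dl] /eqP Dd].
apply/andP; split.
  apply/andP; split.
    by apply/imsetP; exists 0 => //; apply/rowP => i; rewrite !mxE.
  apply/forallP => x; apply/implyP => /imsetP [u uD ->].
  apply/forallP => y; apply/implyP => /imsetP [v vD ->].
  apply/forallP => a; rewrite -rsubmx_lin imset_f //.
  by move: (Dl u) => /implyP /(_ uD) /forallP /(_ v) /implyP /(_ vD) /forallP.
apply/eqP/setP => z.
have e : (z \in herm_dual (rsubmx @: D)) = (row_mx 0 z \in herm_dual D).
  rewrite !inE; apply/forallP/forallP => h u.
    apply/implyP => uD; rewrite herm_row0r.
    by move: (h (rsubmx u)) => /implyP; apply; apply: imset_f.
  apply/implyP => /imsetP [v vD ->]; rewrite -herm_row0r.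
  by move: (h v) => /implyP; apply.
rewrite e Dd; apply/idP/idP => [h|h].
  by apply/imsetP; exists (row_mx 0 z) => //; rewrite row_mxKr.
by rewrite DL inE row_mxKl row_mxKr h !mxE eqxx.
Qed.


Lemma e1_in (X : {set 'rV[F]_k}) : 0 \in X -> e1 \in Lf X.
Proof. by move=> X0; rewrite inE /e1 row_mxKl row_mxKr X0 !mxE eqxx. Qed.

Lemma row0_in (X : {set 'rV[F]_k}) z : (row_mx 0 z \in Lf X) = (z \in X).
Proof. by rewrite inE row_mxKl row_mxKr !mxE eqxx. Qed.

Lemma Q2 (X : {set 'rV[F]_k}) : typeIV X -> typeIV (Lf X).
Proof.
rewrite !(typeIV_alt hF) => /andP [/andP [X0 /forallP Xl] /eqP Xd].
apply/andP; split.
  apply/andP; split.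
    rewrite inE !mxE eqxx /=.
    by have -> : rsubmx (0 : V) = 0 by apply/rowP => i; rewrite !mxE.
  apply/forallP => u; apply/implyP; rewrite inE => /andP [/eqP hu ru].
  apply/forallP => v; apply/implyP; rewrite inE => /andP [/eqP hv rv].
  apply/forallP => a; rewrite inE lsubmx_lin rsubmx_lin; move: hu hv; rewrite !mxE => -> ->; rewrite eqxx /=.
  by move: (Xl (rsubmx u)) => /implyP /(_ ru) /forallP /(_ (rsubmx v)) /implyP /(_ rv) /forallP.
apply/eqP/setP => v; apply/idP/idP => [vd|].
  have e1X := e1_in X0.
  move: (vd); rewrite inE => /forallP hv.
  move: (hv e1) => /implyP /(_ e1X); rewrite herm_e1l => /eqP h.
  rewrite inE; apply/andP; split.
    by rewrite -sum0_eq; apply/eqP; apply: (conj_inj hF); rewrite h conj0.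
  rewrite -Xd inE; apply/forallP => z; apply/implyP => zX.
  by move: (hv (row_mx 0 z)) => /implyP; rewrite row0_in herm_row0l => /(_ zX).
rewrite inE => /andP [/eqP hv rv]; rewrite inE; apply/forallP => u; apply/implyP.
rewrite inE => /andP [/eqP hu ru].
rewrite herm_split herm2 hu hv addxx // add0r.
by move: rv; rewrite -Xd inE => /forallP /(_ (rsubmx u)) /implyP /(_ ru).
Qed.

Lemma Q3 (X : {set 'rV[F]_k}) : rsubmx @: Lf X = X.
Proof.
apply/setP => z; apply/imsetP/idP => [[v vX ->]|zX].
  by move: vX; rewrite inE => /andP [].
by exists (row_mx 0 z); rewrite ?row0_in ?row_mxKr.
Qed.

Lemma Lf_inj : injective Lf.
Proof. by move=> X Y e; rewrite -(Q3 X) -(Q3 Y) e. Qed.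

Lemma Q4 (X : {set 'rV[F]_k}) : #|Lf X| = (4 * #|X|)%N.
Proof.
pose h (p : F * 'rV[F]_k) : V := row_mx (p.1 *: const_mx 1) p.2.
have hinj : injective h.
  move=> [a z] [b w]; rewrite /h /= => /eq_row_mx [e1' ->]; congr (_, _).
  by move/rowP: e1' => /(_ ord0); rewrite !mxE !mulr1.
have -> : Lf X = h @: setX [set: F] X.
  apply/setP => v; apply/idP/imsetP => [|[[a z]]].
    rewrite inE => /andP [/eqP hv rv]; exists (lsubmx v 0 ord0, rsubmx v).
      by rewrite inE /= in_setT rv.
    rewrite /h /= -{1}(hsubmxK v); congr (row_mx _ _); apply/rowP => j.
    rewrite !mxE mulr1; move: hv; rewrite !mxE => hv.
    by case: (ord2_cases j) => ->.
  rewrite inE /= => /andP [_ zX] ->; rewrite inE /h row_mxKl row_mxKr zX !mxE eqxx.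
  done.
by rewrite card_imset // cardsX cardsT hF.
Qed.

Lemma Q5 (X Y : {set 'rV[F]_k}) : Lf X :&: Lf Y = Lf (X :&: Y).
Proof.
apply/setP => v; rewrite !inE.
by case: (_ == _); case: (_ \in X).
Qed.

Lemma Q6 (R : nmodType) (f : {set V} -> R) :
  \sum_(D | typeIV D && (e1 \in D)) f D = \sum_(X | typeIV X) f (Lf X).
Proof.
rewrite [RHS](eq_bigl (fun X => X \in [set X | typeIV X])); last by move=> X; rewrite inE.
rewrite -(big_imset _ (in2W Lf_inj)) /=.
apply: eq_bigl => D; apply/andP/imsetP => [[DIV e1D]|[X]].
  exists (rsubmx @: D); last exact: Q1.
  by rewrite inE; apply: Q1b.
rewrite inE => XIV ->; split; first exact: Q2.
by apply: e1_in; move: XIV; rewrite (typeIV_alt hF) => /andP [/andP []].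
Qed.

End Q.

Section Count.
Variable F : finFieldType.
Hypothesis hF : #|F| = 4%N.

Definition Nx n (x : 'rV[F]_n) : nat := \sum_(D | typeIV D && (x \in D)) 1%N.

Lemma sum_iso n g (x : 'rV[F]_n) (gi : isometry g) (R : nmodType) (f : {set 'rV[F]_n} -> R) :
  \sum_(D | typeIV D && (g x \in D)) f D = \sum_(D | typeIV D && (x \in D)) f (g @: D).
Proof.
rewrite (reindex_inj (imset_inj (iso_inj gi))) /=.
by apply: eq_bigl => D; rewrite (typeIV_isoE hF _ gi) (mem_imset _ _ (iso_inj gi)).
Qed.

Lemma Nx_iso n g (x : 'rV[F]_n) : isometry g -> Nx (g x) = Nx x.
Proof. by move=> gi; rewrite /Nx (sum_iso _ gi). Qed.

Lemma typeIV_0 n (D : {set 'rV[F]_n}) : typeIV D -> 0 \in D.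
Proof. by rewrite (typeIV_alt hF) => /andP [/andP []]. Qed.

Lemma typeIV_iso_el n (D : {set 'rV[F]_n}) x : typeIV D -> x \in D -> herm x x = 0.
Proof.
rewrite (typeIV_alt hF) => /andP [_ /eqP Dd] xD; apply/eqP.
by move: (xD); rewrite -{1}Dd inE => /forallP /(_ x) /implyP /(_ xD).
Qed.

Lemma card_IV n : #|IV_codes F n| = \sum_(D : {set 'rV[F]_n} | typeIV D) 1%N.
Proof. by rewrite sum1_card; apply: eq_card => D; rewrite inE. Qed.

Lemma sum_IV n (f : {set 'rV[F]_n} -> nat) :
  \sum_(D in IV_codes F n) f D = \sum_(D | typeIV D) f D.
Proof. by apply: eq_bigl => D; rewrite inE. Qed.

Lemma Nx0 n : Nx (0 : 'rV[F]_n) = #|IV_codes F n|.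
Proof.
rewrite card_IV /Nx; apply: eq_bigl => D.
by case hD: (typeIV D); rewrite //= typeIV_0.
Qed.

Lemma exchange n (C : {set 'rV[F]_n}) (f : {set 'rV[F]_n} -> nat) :
  (\sum_(D | typeIV D) #|C :&: D| * f D = \sum_(x in C) \sum_(D | typeIV D && (x \in D)) f D)%N.
Proof.
have e D : (#|C :&: D| * f D = \sum_(x in C) (x \in D) * f D)%N.
  rewrite -big_distrl /=; congr (_ * _).
  by rewrite -sum1_card [RHS]big_mkcond [LHS]big_mkcond; apply: eq_bigr => x _;
     rewrite inE; case: (x \in C); case: (x \in D).
rewrite (eq_bigr _ (fun D _ => e D)) exchange_big /=; apply: eq_bigr => x _.
rewrite [RHS]big_mkcondr /=; apply: eq_bigr => D _.
by case: (x \in D); rewrite ?mul1n ?mul0n.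
Qed.


Lemma sum_rows n (phi : F -> rat) :
  \sum_(x : 'rV[F]_n) \prod_(i < n) phi (x 0 i) = (\sum_a phi a) ^+ n.
Proof.
pose h (f : {ffun 'I_n -> F}) : 'rV[F]_n := \row_i f i.
have hb : bijective h.
  exists (fun v : 'rV[F]_n => [ffun i => v 0 i]).
    by move=> f; apply/ffunP => i; rewrite ffunE mxE.
  by move=> v; apply/rowP => i; rewrite mxE ffunE.
rewrite (reindex h) /=; last exact: onW_bij.
rewrite (eq_bigr (fun f : {ffun 'I_n -> F} => \prod_(i < n) phi (f i))); last first.
  by move=> f _; apply: eq_bigr => i _; rewrite mxE.
rewrite -(bigA_distr_bigA (fun (i : 'I_n) a => phi a)) /=.
by rewrite prodr_const card_ord.
Qed.

Lemma iso_card n : ~~ odd n ->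
  (2 * #|[set x : 'rV[F]_n | herm x x == 0%R]| = 4 ^ n + 2 ^ n)%N.
Proof.
move=> hn; apply/eqP; rewrite -(eqr_nat rat) natrM natrD !natrX; apply/eqP.
have e1 (x : 'rV[F]_n) : 2 * (nat_of_bool (herm x x == 0%R))%:R =
    1 + \prod_(i < n) (if x 0 i == 0 then 1 else -1) :> rat.
  have -> : \prod_(i < n) (if x 0 i == 0 then 1 else -1) = (-1) ^+ hwt x :> rat.
    rewrite /hwt -prodr_const [RHS]big_mkcond /=; apply: eq_bigr => i _; rewrite inE.
    by case: (x 0 i == 0).
  rewrite (herm_self_even hF).
  rewrite -signr_odd; case: (odd _) => /=.
    by rewrite mulr0 expr1 addrN.
  by rewrite mulr1 expr0.
rewrite -sum1_card natr_sum mulr_sumr big_mkcond /=.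
rewrite (eq_bigr (fun x : 'rV[F]_n => 1 + \prod_(i < n) (if x 0 i == 0 then 1 else -1))); last first.
  by move=> x _; rewrite inE -e1; case: (herm x x == 0); rewrite ?mulr0.
rewrite big_split /= (sum_rows n (fun a => if a == 0 then 1 else -1)) sumr_const card_mx mul1n hF.
have -> : \sum_(a : F) (if a == 0 then 1 else -1) = - 2 :> rat.
  rewrite (bigD1 0) //= eqxx (eq_bigr (fun _ => -1)); last by move=> a /negbTE ->.
  rewrite sumr_const cardC1 hF /=.
  by apply/eqP.
rewrite exprNn -signr_odd (negbTE hn) expr0 mul1r.
by rewrite natrX.
Qed.


Lemma e1_delta k : delta F (lshift k (ord0 : 'I_2)) + delta F (lshift k ord_max) = e1 F k.
Proof.
rewrite -[LHS]hsubmxK /e1; congr (row_mx _ _); apply/rowP => j; rewrite !mxE.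
  rewrite -!val_eqE /=; case: (ord2_cases j) => -> /=; by rewrite ?addr0 ?add0r.
by rewrite -!val_eqE /= addr0.
Qed.

Lemma e1_neq0 k : e1 F k != 0.
Proof.
apply/eqP => /rowP /(_ (lshift k ord0)); rewrite /e1 row_mxEl !mxE.
by move/eqP; rewrite oner_eq0.
Qed.

Lemma exists_nonzero n (D : {set 'rV[F]_n}) (x1 : 'rV[F]_n) : typeIV D -> x1 != 0 ->
  exists2 x, x \in D & x != 0.
Proof.
move=> DIV x10; case: (boolP [exists x in D, x != 0]) => [/exists_inP [x xD x0]|/exists_inPn h].
  by exists x.
have : x1 \in D.
  move: DIV; rewrite (typeIV_alt hF) => /andP [_ /eqP <-]; rewrite inE.
  apply/forall_inP => u uD; move: (h u uD); rewrite negbK => /eqP ->.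
  by rewrite herm0l.
by move/h; rewrite x10.
Qed.

Lemma M0_step k : (forall D : {set 'rV[F]_k}, typeIV D -> #|D| = 2 ^ k)%N ->
  forall D : {set 'rV[F]_(2 + k)}, typeIV D -> #|D| = (2 ^ (2 + k))%N.
Proof.
move=> IH D DIV.
have [x xD x0] := exists_nonzero DIV (e1_neq0 k).
have xx := typeIV_iso_el DIV xD.
have zo : lshift k (ord0 : 'I_2) != lshift k ord_max by rewrite eq_lshift.
have [g [gi gx]] := T1 hF zo x0 xx.
rewrite e1_delta in gx.
have gDIV : typeIV (g @: D) := typeIV_iso hF gi DIV.
have e1gD : e1 F k \in g @: D by rewrite -gx imset_f.
rewrite -(card_imset D (iso_inj gi)) {1}(Q1 hF gDIV e1gD) (Q4 hF) (IH _ (Q1b hF gDIV e1gD)).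
by rewrite expnD.
Qed.

Lemma M0m m : forall D : {set 'rV[F]_(m.*2)}, typeIV D -> #|D| = (2 ^ (m.*2))%N.
Proof.
elim: m => [|m IH] D DIV; last exact: (@M0_step (m.*2) IH D DIV).
apply/eqP; rewrite eqn_leq; apply/andP; split.
  by rewrite (leq_trans (max_card _)) // card_mx.
by rewrite card_gt0; apply/set0Pn; exists 0; apply: typeIV_0.
Qed.

Lemma M0 n : ~~ odd n -> forall D : {set 'rV[F]_n}, typeIV D -> #|D| = (2 ^ n)%N.
Proof.
move=> hn; have [m em] : exists m, n = m.*2.
  by exists n./2; rewrite -{1}(odd_double_half n) (negbTE hn).
subst n; exact: M0m.
Qed.


Lemma N_e1 k : Nx (e1 F k) = #|IV_codes F k|.
Proof. by rewrite /Nx (Q6 hF (fun _ => 1%N)) card_IV. Qed.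

Lemma T1e k (x : 'rV[F]_(2 + k)) : x != 0 -> herm x x = 0 ->
  exists g, isometry g /\ g x = e1 F k.
Proof.
move=> x0 xx.
have zo : lshift k (ord0 : 'I_2) != lshift k ord_max by rewrite eq_lshift.
have [g [gi gx]] := T1 hF zo x0 xx.
by exists g; rewrite -e1_delta.
Qed.

Lemma Nx_const k (x : 'rV[F]_(2 + k)) : x != 0 -> herm x x = 0 -> Nx x = Nx (e1 F k).
Proof.
by move=> x0 xx; have [g [gi <-]] := T1e x0 xx; rewrite Nx_iso.
Qed.

Lemma N_rel k : ~~ odd k ->
  ((2 ^ (2 + k) + 2) * #|IV_codes F k| = 2 * #|IV_codes F (2 + k)|)%N.
Proof.
move=> hk; have hn : ~~ odd (2 + k) by rewrite oddD.
set Iso := [set x : 'rV[F]_(2 + k) | herm x x == 0%R].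
set Iso1 := Iso :\ 0.
have ex := exchange Iso1 (fun _ => 1%N).
have L : (\sum_(D | typeIV D) #|Iso1 :&: D| * 1 = #|IV_codes F (2 + k)| * (2 ^ (2 + k) - 1))%N.
  rewrite card_IV big_distrl /=; apply: eq_bigr => D DIV.
  have -> : Iso1 :&: D = D :\ 0.
    apply/setP => x; rewrite !inE; case: (x == 0) => //=.
    case xD: (x \in D); rewrite ?andbF ?andbT //.
    by rewrite (typeIV_iso_el DIV xD) eqxx.
  move: (cardsD1 0 D); rewrite typeIV_0 // (M0 hn DIV) add1n => ->; rewrite muln1 mul1n subSS subn0 //.
have R : (\sum_(x in Iso1) \sum_(D | typeIV D && (x \in D)) 1 = #|Iso1| * #|IV_codes F k|)%N.
  rewrite -sum_nat_const; apply: eq_bigr => x; rewrite !inE => /andP [x0 xx].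
  by rewrite -N_e1 -(Nx_const x0 (eqP xx)).
rewrite ex R in L.
have cI : (#|Iso1| = #|Iso| - 1)%N.
  by rewrite /Iso1 (cardsD1 0 Iso) !inE herm0l eqxx add1n subn1.
have hiso := iso_card hn.
have t1 : (1 <= 2 ^ (2 + k))%N by rewrite expn_gt0.
have e4 : (4 ^ (2 + k) = 2 ^ (2 + k) * 2 ^ (2 + k))%N by rewrite -expnMn.
move: L hiso; rewrite cI e4 -/Iso.
set t := (2 ^ (2 + k))%N; set a := #|IV_codes F k|; set b := #|IV_codes F (2 + k)|.
set c := #|Iso| => L hiso.
have t2 : (2 <= t)%N.
  have : (1 <= 2 ^ k)%N by rewrite expn_gt0.
  rewrite /t expnD (_ : 2 ^ 2 = 4)%N //; lia.
apply/eqP; rewrite -(@eqn_pmul2l (t - 1)); last by rewrite subn_gt0.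
apply/eqP; nia.
Qed.


Lemma sumC_Nx n (C : {set 'rV[F]_n}) :
  (\sum_(D in IV_codes F n) #|C :&: D| = \sum_(x in C) Nx x)%N.
Proof.
rewrite sum_IV -(exchange C (fun _ => 1%N)); apply: eq_bigr => D _.
by rewrite muln1.
Qed.

Lemma M1_step k (hk : ~~ odd k) (C : {set 'rV[F]_(2 + k)}) : typeIV C ->
  ((2 ^ (2 + k) + 2) * \sum_(D in IV_codes F (2 + k)) #|C :&: D|
     = 3 * 2 ^ (2 + k) * #|IV_codes F (2 + k)|)%N.
Proof.
move=> hC; have hn : ~~ odd (2 + k) by rewrite oddD.
rewrite sumC_Nx (bigD1 0) /=; last exact: typeIV_0.
rewrite Nx0 (eq_bigr (fun _ => #|IV_codes F k|)); last first.
  move=> x /andP [xC x0]; rewrite -N_e1; apply: Nx_const => //.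
  exact: typeIV_iso_el hC xC.
rewrite sum_nat_const.
have cC : (#|[pred x | (x \in C) && (x != 0%R)]| = 2 ^ (2 + k) - 1)%N.
  move: (cardD1 0 C); rewrite typeIV_0 // (M0 hn hC) add1n => ->.
  by rewrite subSS subn0; apply: eq_card => x; rewrite !inE andbC.
rewrite cC; have NR := N_rel hk.
have t1 : (1 <= 2 ^ (2 + k))%N by rewrite expn_gt0.
move: NR t1; set t := (2 ^ (2 + k))%N; set a := #|IV_codes F k|; set b := #|IV_codes F (2 + k)|.
move=> NR t1; nia.
Qed.

Lemma M1 n (hn : ~~ odd n) (C : {set 'rV[F]_n}) : typeIV C ->
  ((2 ^ n + 2) * \sum_(D in IV_codes F n) #|C :&: D| = 3 * 2 ^ n * #|IV_codes F n|)%N.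
Proof.
case: n hn C => [|[//|k]] hn C hC; last first.
  have hk : ~~ odd k by move: hn; rewrite /= negbK.
  by have := @M1_step k hk C hC.
rewrite sum_IV card_IV !big_distrr /=; apply: eq_bigr => D DIV.
have -> : C :&: D = [set 0].
  apply/setP => x; rewrite !inE.
  have -> : x = 0 by apply/rowP => i; case: i.
  by rewrite eqxx typeIV_0 // typeIV_0.
by rewrite cards1.
Qed.


Lemma S_nonzero k (C : {set 'rV[F]_(2 + k)}) (hC : typeIV C) x : x \in C -> x != 0 ->
  exists2 Y : {set 'rV[F]_k}, typeIV Y &
   (\sum_(D | typeIV D && (x \in D)) #|C :&: D| = 4 * \sum_(X | typeIV X) #|Y :&: X|)%N.
Proof.
move=> xC x0.
have [g [gi gx]] := T1e x0 (typeIV_iso_el hC xC).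
have gCIV := typeIV_iso hF gi hC.
have e1gC : e1 F k \in g @: C by rewrite -gx imset_f.
exists (rsubmx @: (g @: C)); first by exact (Q1b hF gCIV e1gC).
have step1 : (\sum_(D | typeIV D && (x \in D)) #|C :&: D| =
    \sum_(D | typeIV D && (x \in D)) #|g @: C :&: g @: D|)%N.
  apply: eq_bigr => D _; rewrite -imsetI; last by move=> u v _ _; apply: (iso_inj gi).
  by rewrite card_imset //; apply: (iso_inj gi).
rewrite step1; have := sum_iso x gi (fun D => #|g @: C :&: D|); rewrite /= => <-.
rewrite gx (Q6 hF (fun D => #|g @: C :&: D|)) big_distrr; apply: eq_bigr => X XIV /=.
by rewrite {1}(Q1 hF gCIV e1gC) Q5 (Q4 hF).
Qed.


Lemma M2_step k (hk : ~~ odd k) (C : {set 'rV[F]_(2 + k)}) : typeIV C ->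
  ((2 ^ (2 + k) + 2) * (2 ^ (2 + k) + 8) * \sum_(D in IV_codes F (2 + k)) #|C :&: D| ^ 2
     = 27 * (2 ^ (2 + k)) ^ 2 * #|IV_codes F (2 + k)|)%N.
Proof.
move=> hC; have hn : ~~ odd (2 + k) by rewrite oddD.
have hA := M1_step hk hC.
have NR := N_rel hk.
set A := (\sum_(D in IV_codes F (2 + k)) #|C :&: D|)%N in hA.
have e2 : (\sum_(D in IV_codes F (2 + k)) #|C :&: D| ^ 2 =
   A + \sum_(x | (x \in C) && (x != 0%R)) \sum_(D | typeIV D && (x \in D)) #|C :&: D|)%N.
  rewrite sum_IV (eq_bigr (fun D => #|C :&: D| * #|C :&: D|)%N); last by move=> D _; rewrite mulnn.
  rewrite exchange (bigD1 0) /=; last exact: typeIV_0.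
  congr (_ + _)%N; rewrite /A sum_IV; apply: eq_bigl => D.
  by case DIV: (typeIV D); rewrite //= typeIV_0.
set T := (\sum_(x in C | _) _)%N in e2.
have hT : ((2 ^ k + 2) * T = (2 ^ (2 + k) - 1) * (4 * (3 * 2 ^ k * #|IV_codes F k|)))%N.
  rewrite /T big_distrr /=.
  rewrite (eq_bigr (fun _ => 4 * (3 * 2 ^ k * #|IV_codes F k|))%N); last first.
    move=> x /andP [xC x0]; have [Y YIV ->] := S_nonzero hC xC x0.
    by rewrite mulnCA -(M1 hk YIV) sum_IV.
  rewrite sum_nat_const; congr (_ * _)%N.
  move: (cardD1 0 C); rewrite typeIV_0 // (M0 hn hC) add1n => ->.
  by rewrite subSS subn0; apply: eq_card => x; rewrite !inE andbC.
rewrite e2.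
have t4 : (2 ^ (2 + k) = 4 * 2 ^ k)%N by rewrite expnD.
have t1 : (1 <= 2 ^ k)%N by rewrite expn_gt0.
move: hA NR hT t4 t1.
set t := (2 ^ (2 + k))%N; set s := (2 ^ k)%N; set a := #|IV_codes F k|; set b := #|IV_codes F (2 + k)|.
move=> hA NR hT t4 t1.
have E0 : (t + 8 = 4 * (s + 2))%N by rewrite t4; lia.
have E1 : ((t + 2) * (t + 8) * T = 4 * (t - 1) * (12 * s) * ((t + 2) * a))%N.
  rewrite E0 (_ : ((t + 2) * (4 * (s + 2)) * T = 4 * (t + 2) * ((s + 2) * T))%N); last by ring.
  rewrite hT; ring.
rewrite NR in E1.
have E2 : ((t + 2) * (t + 8) * A = (t + 8) * (3 * t * b))%N.
  by rewrite mulnAC hA mulnC.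
rewrite mulnDr E1 E2 t4.
have [u su] : exists u, s = u.+1 by exists s.-1; rewrite prednK.
rewrite su (_ : (4 * u.+1 - 1 = 4 * u + 3)%N); last by lia.
ring.
Qed.


Lemma M2 n (hn : ~~ odd n) (C : {set 'rV[F]_n}) : typeIV C ->
  ((2 ^ n + 2) * (2 ^ n + 8) * \sum_(D in IV_codes F n) #|C :&: D| ^ 2
     = 27 * (2 ^ n) ^ 2 * #|IV_codes F n|)%N.
Proof.
case: n hn C => [|[//|k]] hn C hC; last first.
  have hk : ~~ odd k by move: hn; rewrite /= negbK.
  by have := @M2_step k hk C hC.
rewrite sum_IV card_IV !big_distrr /=; apply: eq_bigr => D DIV.
have -> : C :&: D = [set 0].
  apply/setP => x; rewrite !inE.
  have -> : x = 0 by apply/rowP => i; case: i.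
  by rewrite eqxx typeIV_0 // typeIV_0.
by rewrite cards1.
Qed.

End Count.

Unset Implicit Arguments.

Theorem theorem5p6 (F : finFieldType) (hF : #|F| = 4%N) (n : nat)
    (hn : ~~ odd n) (C : {set 'rV[F]_n}) (hC : typeIV C) :
  (\sum_(D in IV_codes F n) (#|C :&: D|%:R : rat)) / (#|IV_codes F n|%:R)
    = 3 - 3 / ((2 : rat) ^ (n%:Z - 1) + 1)
  /\
  (\sum_(D in IV_codes F n) ((#|C :&: D| ^ 2)%N%:R : rat)) / (#|IV_codes F n|%:R)
    = 27 * ((2 : rat) ^+ n) ^+ 2 / (((2 : rat) ^+ n + 2) * ((2 : rat) ^+ n + 8)).
Proof.
have h1 := M1 hF hn hC.
have h2 := M2 hF hn hC.
rewrite -!natr_sum.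
have I0 : (#|IV_codes F n|%:R : rat) != 0.
  rewrite pnatr_eq0 -lt0n card_gt0; apply/set0Pn; exists C; by rewrite inE.
move: h1 h2 I0.
set A := (\sum_(D in _) #|C :&: D|)%N.
set B := (\sum_(D in _) #|C :&: D| ^ 2)%N.
set I := #|IV_codes F n|.
move=> /(congr1 (fun m => m%:R : rat)) h1 /(congr1 (fun m => m%:R : rat)) h2 I0.
rewrite !natrM !natrD !natrX /= in h1 h2.
have e : (2 : rat) ^ (n%:Z - 1) = 2 ^+ n / 2.
  by rewrite expfzDr // exprN1.
rewrite e; set t := (2 : rat) ^+ n in h1 h2 *.
have t0 : 0 < t by rewrite exprn_gt0.
have t2 : t + 2 != 0 by rewrite lt0r_neq0 // addr_gt0.
have t8 : t + 8 != 0 by rewrite lt0r_neq0 // addr_gt0.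
have t2' : t / 2 + 1 != 0 by rewrite lt0r_neq0 // addr_gt0 // divr_gt0.
split.
  have -> : (A%:R : rat) = 3 * t * I%:R / (t + 2).
    by rewrite -h1 [(_ + 2) * _]mulrC mulfK.
  by field; rewrite ?t2 ?t8 ?I0.
have -> : (B%:R : rat) = 27 * t ^+ 2 * I%:R / ((t + 2) * (t + 8)).
  by rewrite -h2 [(_ * (_ + 8)) * _]mulrC mulfK // mulf_neq0.
by field; rewrite ?t2 ?t8 ?I0.
Qed.
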